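(* Let $0<\varepsilon<1$. For $n,k\in\mathbb N$ with $k$ even and $k<n$, define $K_i=\{\frac{i-1}2k,\dots,\frac i2k-1\}$ for $i=1,\dots,\lceil 2n/k\rceil-1$ and $K_{\lceil2n/k\rceil}=\{\frac{\lceil2n/k\rceil-1}{2}k,\dots,n-1\}$; for $S\subset n^*=\{0,\dots,n-1\}$ let $B(S)=\operatorname{card}\{i:S\cap K_i\neq\emptyset\}$, and let $\mathcal B(n,k,\varepsilon)=\{S\subset n^*:B(S)\le(2n/k)(1-\varepsilon)\}$. Then there exists an even $k\in\mathbb N$ such that $\lim_{n\to\infty}\operatorname{card}(\mathcal B(n,k,\varepsilon))/2^n=0$. *)

(* Defs.v *)
From HB Require Import structures.
From mathcomp Require Import all_boot all_order all_algebra.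
From mathcomp Require Import all_classical all_reals all_analysis.
Set Implicit Arguments. Unset Strict Implicit. Unset Printing Implicit Defensive.
Import Order.TTheory GRing.Theory Num.Theory.
Local Open Scope ring_scope.

Definition nblocks (n k : nat) : nat := ((2 * n + k - 1) %/ k)%N.

(* K_i for 1 <= i <= nblocks n k, as a subset of n^* = 'I_n.
   K_i = {(i-1)k/2, ..., ik/2 - 1} for i < nblocks,
   K_last = {(nblocks-1)k/2, ..., n-1}. (k even, so k/2 = k./2) *)
Definition Kblock (n k i : nat) : {set 'I_n} :=
  if (i < nblocks n k)%N then
    [set j : 'I_n | ((i.-1 * k./2 <= j) && (j < i * k./2))%N]
  else [set j : 'I_n | ((nblocks n k).-1 * k./2 <= j)%N].

Definition Bcount (n k : nat) (S : {set 'I_n}) : nat :=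
  #|[set i : 'I_(nblocks n k).+1 | (0 < i)%N && (S :&: Kblock n k i != finset.set0)]|.

Definition Bfam (R : realType) (n k : nat) (eps : R) : {set {set 'I_n}} :=
  [set S : {set 'I_n} |
     (Bcount k S)%:R <= (2 * n)%:R / k%:R * (1 - eps)].

(* Main.v *)
Require Import Defs.
From HB Require Import structures.
From mathcomp Require Import all_boot all_order all_algebra.
From mathcomp Require Import all_classical all_reals all_analysis.
From mathcomp Require Import zify ring lra.
Import Order.TTheory GRing.Theory Num.Theory.
Import numFieldNormedType.Exports.
Local Open Scope ring_scope.

Lemma card_sets (T : finType) : #|{set T}| = (2 ^ #|T|)%N.
Proof. by have := card_powerset [set: T]; rewrite powersetT !cardsT. Qed.

Lemma arith_key (B n m e : nat) :
  (B <= 2 ^ m.+1 * 2 ^ e)%N -> (2 * m.-1 + e)%N = n -> (B * m <= 4 * 2 ^ n)%N.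
Proof.
case: m => [|p] /=; first by move=> *; rewrite muln0.
move=> HB <-.
have Hp : (p < 2 ^ p)%N by apply: ltn_expl.
move: HB; rewrite !expnS expnD mul2n -addnn !expnD expn0 muln1.
set x := (2 ^ p)%N; set y := (2 ^ e)%N.
move=> HB; nia.
Qed.

Lemma count_bound (R : realType) (eps : R) (h n : nat) :
  (0 < h)%N -> 2 <= h%:R * eps -> 0 < eps -> eps < 1 ->
  (#|Bfam n h.*2 eps| * n.+1 <= 8 * h * 2 ^ n)%N.
Proof.
move=> h0 heps e0 e1.
pose k := h.*2.
pose m := nblocks n k.
have hk2 : k./2 = h by rewrite /k doubleK.
have Hm1 : (n <= m * h)%N by rewrite /m /nblocks /k; lia.
have Hm2 : (m * h < n + h)%N by rewrite /m /nblocks /k; lia.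
have Hq : forall j : 'I_n, ((j %/ h) < m)%N.
  move=> j; rewrite ltn_divLR //; exact: leq_trans (ltn_ord j) Hm1.
pose BS (S : {set 'I_n}) : {set 'I_m.+1} :=
  [set i : 'I_m.+1 | (0 < i)%N && (S :&: Kblock n k i != finset.set0)].
pose P (T : {set 'I_m.+1}) : {set 'I_n} := [set j : 'I_n | inord (j %/ h).+1 \in T].
have C1 : forall S : {set 'I_n}, S \subset P (BS S).
  move=> S; apply/fintype.subsetP => j jS; rewrite !inE.
  have Hj := Hq j.
  rewrite inordK; last by lia.
  apply/set0Pn; exists j; rewrite !inE jS /Kblock /= -/m.
  case: ifP => Hc; rewrite inE /=.
    have := divn_eq j h; have := ltn_pmod j h0; rewrite hk2; nia.
  have := divn_eq j h; have := ltn_pmod j h0; rewrite hk2; nia.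
have C2 : forall T, (#|P T| <= h * #|T|)%N.
  move=> T.
  pose f := fun j : 'I_n => (inord (j %/ h).+1 : 'I_m.+1, Ordinal (ltn_pmod j h0)).
  have finj : injective f.
    move=> a b [] Hab Hmod.
    have Ha := Hq a; have Hb := Hq b.
    move: (congr1 val Hab) => /=; rewrite !inordK; [|lia|lia].
    move=> [] Hd; apply: val_inj => /=.
    by rewrite (divn_eq a h) (divn_eq b h) Hd Hmod.
  rewrite -(card_imset _ finj).
  have -> : (h * #|T| = #|finset.setX T [set: 'I_h]|)%N by rewrite cardsX cardsT card_ord mulnC.
  apply: subset_leq_card; apply/fintype.subsetP => x /imsetP [j jP ->].
  by rewrite !inE /=; rewrite inE in jP; rewrite jP.
have C3 : forall S : {set 'I_n}, S \in Bfam n k eps -> (h * #|BS S| + 2 * m.-1 <= n)%N.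
  move=> S; rewrite inE => HS.
  have HS' : (#|BS S|%:R : R) <= n%:R / h%:R * (1 - eps).
    have -> : (n%:R / h%:R : R) = (2 * n)%:R / k%:R.
      rewrite /k -muln2 !natrM; field.
      by rewrite pnatr_eq0 -lt0n.
    exact: HS.
  have hR : (0 : R) < h%:R by rewrite ltr0n.
  have hb : (h%:R * #|BS S|%:R : R) <= n%:R * (1 - eps).
    have := ler_wpM2l (ltW hR) HS'.
    have -> : (h%:R * (n%:R / h%:R * (1 - eps)) : R) = n%:R * (1 - eps).
      by field; rewrite gt_eqF.
    by [].
  have ha : (m.-1 * h <= n)%N by lia.
  have haR : ((m.-1)%:R * h%:R : R) <= n%:R by rewrite -natrM ler_nat.
  rewrite -(ler_nat R) natrD !natrM.
  have a0 : (0 : R) <= (m.-1)%:R by [].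
  nra.
have C3' : forall S : {set 'I_n}, S \in Bfam n k eps -> (2 * m.-1 <= n)%N.
  move=> S /C3; lia.
have C4 : (#|Bfam n k eps| <= 2 ^ m.+1 * 2 ^ (n - 2 * m.-1))%N.
  rewrite -sum1_card.
  rewrite (partition_big BS (fun T => (h * #|T| + 2 * m.-1 <= n)%N)) /=; last first.
    by move=> S /C3.
  apply: (@leq_trans (\sum_(T : {set 'I_m.+1} | (h * #|T| + 2 * m.-1 <= n)%N) 2 ^ (n - 2 * m.-1))).
    apply: leq_sum => T HT.
    apply: (@leq_trans #|powerset (P T)|).
      rewrite -sum1_card big_mkcond [X in (_ <= X)%N]big_mkcond /=.
      apply: leq_sum => S _.
      case: ifP => // /andP [_ /eqP <-]; by rewrite powersetE C1.
    rewrite card_powerset leq_pexp2l //; have := C2 T. move: HT; move: (h * #|T|)%N (#|P T|) => x y; lia.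
  rewrite big_mkcond /=.
  apply: (@leq_trans (\sum_(T : {set 'I_m.+1}) 2 ^ (n - 2 * m.-1))).
    by apply: leq_sum => T _; case: ifP.
  by rewrite sum_nat_const card_sets card_ord.
have C5 : (#|Bfam n k eps| <= 2 ^ n)%N.
  by have := max_card (mem (Bfam n k eps)); rewrite card_sets card_ord.
case: (set_0Vmem (Bfam n k eps)) => [->|[S HS]]; first by rewrite cards0.
have H2 := C3' S HS.
have key := @arith_key _ _ _ _ C4 (subnKC H2).
have H3 : (#|Bfam n k eps| * n <= #|Bfam n k eps| * (m * h))%N by apply: leq_mul.
rewrite /k in key H3 C5 *.
nia.
Qed.

Local Open Scope classical_set_scope.

Theorem lemma3p2 (R : realType) (eps : R) :
  0 < eps -> eps < 1 ->
  exists k : nat, [/\ ~~ odd k, (0 < k)%N &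
    (fun n : nat => (#|Bfam n k eps|%:R / (2 ^ n)%:R : R)) @ \oo --> (0 : R)].
Proof.
move=> e0 e1.
pose h := Num.Def.archi_bound (2 / eps).
have e2 : 0 < 2 / eps by rewrite divr_gt0.
have Hh : 2 / eps < h%:R := archi_boundP (ltW e2).
have h0 : (0 < h)%N by rewrite -(ltr0n R); apply: lt_trans Hh.
have heps : 2 <= h%:R * eps by rewrite -ler_pdivrMr // ltW.
exists h.*2; split; [by rewrite odd_double | by rewrite double_gt0 |].
apply: (@squeeze_cvgr _ _ _ _ (fun=> 0) (fun n => (8 * h)%:R * harmonic n) _).
- apply: nearW => n /=; apply/andP; split.
    by rewrite divr_ge0.
  have Hc := @count_bound R eps h n h0 heps e0 e1.
  rewrite ler_pdivrMr ?ltr0n ?expn_gt0 //.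
  rewrite mulrAC ler_pdivlMr ?ltr0n // -!natrM ler_nat.
  exact: Hc.
- exact: cvg_cst.
- have := cvgMl_tmp (a := (8 * h)%:R) (@cvg_harmonic R).
  rewrite mulr0; apply; exact: nbhs_filter.
Qed.
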